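(* For a set $A\subset\mathbb{R}^2\times\mathbb{R}^2$ the following conditions are equivalent: (i) for all $(x^0,y^0),(x^1,y^1)\in A$, $$(1-t)c(x^0,y^0)+t\,c(x^1,y^1)\le t(1-t)\,c(y^0,y^1),\qquad t\in[0,1];$$ (ii) there is $G\in\mathfrak{M}$ such that $c(x,y)\le\phi_G(y)$ for all $(x,y)\in A$.
   Context: $c(x,y)=(x_1-y_1)(x_2-y_2)$ for $x,y\in\mathbb{R}^2$. A set $G\subset\mathbb{R}^2$ is monotone if $c(r,s)\ge0$ for all $r,s\in G$, maximal monotone if it is not a proper subset of a monotone set; $\mathfrak{M}$ is the family of maximal monotone sets. $\phi_G(y)=\inf_{x\in G}c(x,y)$. *)

(* Defs.v *)
From HB Require Import structures.
From mathcomp Require Import all_boot all_order all_algebra.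
From mathcomp Require Import all_classical all_reals ereal.
Set Implicit Arguments. Unset Strict Implicit. Unset Printing Implicit Defensive.
Import Order.TTheory GRing.Theory Num.Theory.
Local Open Scope classical_set_scope.
Local Open Scope ring_scope.

Definition cost {R : realType} (x y : R * R) : R := (x.1 - y.1) * (x.2 - y.2).

Definition monotone {R : realType} (G : set (R * R)) : Prop :=
  forall r s, G r -> G s -> 0 <= cost r s.

Definition maximal_monotone {R : realType} (G : set (R * R)) : Prop :=
  monotone G /\ forall H : set (R * R), monotone H -> G `<=` H -> H = G.

Definition phi {R : realType} (G : set (R * R)) (y : R * R) : \bar R :=
  ereal_inf [set (cost x y)%:E | x in G].

(* Main.v *)
Require Import Defs.
From mathcomp Require Import all_boot all_order all_algebra.
From mathcomp Require Import all_classical all_reals ereal.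
From mathcomp Require Import ring lra.
Import Order.TTheory GRing.Theory Num.Theory.
Local Open Scope classical_set_scope.
Local Open Scope ring_scope.

Section Aux.
Variable R : realType.
Implicit Types (r s : R * R) (u v w p q D K B a b : R).

Definition pS r : R := r.1 + r.2.
Definition pD r : R := r.1 - r.2.

Lemma cost4 r s : 4 * cost r s = (pS r - pS s)^+2 - (pD r - pD s)^+2.
Proof. rewrite /cost /pS /pD; ring. Qed.

Lemma sqK u : `|u| ^+ 2 = u ^+ 2.
Proof. exact: real_normK (num_real _). Qed.

Lemma le_sqrt_of u X : 0 <= X -> u <= X ^+ 2 -> Num.sqrt u <= X.
Proof.
move=> X0 h; rewrite -(ger0_norm X0) -sqrtr_sqr.
exact: ler_wsqrtr.
Qed.

Lemma sqrt_lip B u v : 0 <= B ->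
  Num.sqrt (u ^+ 2 + B) <= Num.sqrt (v ^+ 2 + B) + `|u - v|.
Proof.
move=> B0; set w := Num.sqrt (v ^+ 2 + B).
have w0 : 0 <= w by exact: sqrtr_ge0.
have w2 : w ^+ 2 = v ^+ 2 + B by rewrite sqr_sqrtr //; nra.
have vw : `|v| <= w.
  by rewrite -sqrtr_sqr; apply: ler_wsqrtr; lra.
have n0 : 0 <= `|u - v| by [].
apply: le_sqrt_of; first lra.
have h1 : v * (u - v) <= `|v| * `|u - v|.
  by rewrite -normrM; apply: ler_norm.
have h2 : `|u - v| ^+ 2 = (u - v) ^+ 2 by exact: sqK.
have h3 : `|v| * `|u - v| <= w * `|u - v| by apply: ler_wpM2r.
nra.
Qed.

Lemma keyA K (B0 B1 : R) : 0 <= B0 -> 0 <= B1 ->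
  (forall t, 0 <= t <= 1 -> t * (1 - t) * K <= (1 - t) * B0 + t * B1) ->
  K <= (Num.sqrt B0 + Num.sqrt B1) ^+ 2.
Proof.
move=> h0 h1 H; set b0 := Num.sqrt B0; set b1 := Num.sqrt B1.
have e0 : b0 ^+ 2 = B0 by rewrite sqr_sqrtr.
have e1 : b1 ^+ 2 = B1 by rewrite sqr_sqrtr.
have g0 : 0 <= b0 by exact: sqrtr_ge0.
have g1 : 0 <= b1 by exact: sqrtr_ge0.
rewrite leNgt; apply/negP => hK.
have Kp : 0 < K by nra.
have [z0|nz0] := eqVneq b0 0.
  pose t := (K - B1) / (2 * K).
  have tE : t * (2 * K) = K - B1 by rewrite /t mulfVK //; lra.
  have t0 : 0 < t by rewrite /t divr_gt0 //; nra.
  have t1 : t <= 1 by rewrite /t ler_pdivrMr; nra.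
  have Ht := H t; have {}Ht := Ht (_ : _); rewrite (ltW t0) t1 in Ht.
  have {}Ht := Ht isT.
  have B00 : B0 = 0 by rewrite -e0 z0 expr0n.
  have hK' : B1 < K by move: hK; rewrite z0 add0r e1.
  have : t * ((1 - t) * K - B1) <= 0 by rewrite B00 in Ht; nra.
  rewrite pmulr_rle0 //; nra.
have [z1|nz1] := eqVneq b1 0.
  pose t := (K - B0) / (2 * K).
  have tE : t * (2 * K) = K - B0 by rewrite /t mulfVK //; lra.
  have t0 : 0 < t by rewrite /t divr_gt0 //; nra.
  have t1 : t <= 1 by rewrite /t ler_pdivrMr; nra.
  have Ht : (1 - t) * (1 - (1 - t)) * K <= (1 - (1 - t)) * B0 + (1 - t) * B1.
    by apply: H; apply/andP; split; lra.
  have B10 : B1 = 0 by rewrite -e1 z1 expr0n.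
  have hK' : B0 < K by move: hK; rewrite z1 addr0 e0.
  have : t * ((1 - t) * K - B0) <= 0 by rewrite B10 in Ht; nra.
  rewrite pmulr_rle0 //; nra.
have p0 : 0 < b0 by rewrite lt_def nz0.
have p1 : 0 < b1 by rewrite lt_def nz1.
pose t := b0 / (b0 + b1).
have tE : t * (b0 + b1) = b0 by rewrite /t mulfVK //; lra.
have t0 : 0 <= t by rewrite /t divr_ge0 //; lra.
have t1 : t <= 1 by rewrite /t ler_pdivrMr; nra.
have Ht := H t; rewrite t0 t1 in Ht; have {}Ht := Ht isT.
have tE' : (1 - t) * (b0 + b1) = b1 by nra.
have s0 : 0 <= (b0 + b1) ^+ 2 by nra.
have := ler_wpM2l s0 Ht.
have -> : (b0 + b1) ^+ 2 * (t * (1 - t) * K) = (t * (b0 + b1)) * ((1 - t) * (b0 + b1)) * K by ring.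
have -> : (b0 + b1) ^+ 2 * ((1 - t) * B0 + t * B1) =
   (b0 + b1) * (((1 - t) * (b0 + b1)) * B0 + (t * (b0 + b1)) * B1) by ring.
rewrite tE tE' -e0 -e1.
have -> : (b0 + b1) * (b1 * b0 ^+ 2 + b0 * b1 ^+ 2) = (b0 * b1) * (b0 + b1) ^+ 2 by ring.
rewrite ler_pM2l; [lra | exact: mulr_gt0].
Qed.

Lemma keyB p q D (b0 b1 : R) : 0 <= b0 -> 0 <= b1 ->
  D ^+ 2 <= (q - p) ^+ 2 + (b0 + b1) ^+ 2 ->
  D <= Num.sqrt (p ^+ 2 + b0 ^+ 2) + Num.sqrt (q ^+ 2 + b1 ^+ 2).
Proof.
move=> g0 g1 hD.
set h0 := Num.sqrt _; set h1 := Num.sqrt _.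
have e0 : h0 ^+ 2 = p ^+ 2 + b0 ^+ 2 by rewrite sqr_sqrtr //; nra.
have e1 : h1 ^+ 2 = q ^+ 2 + b1 ^+ 2 by rewrite sqr_sqrtr //; nra.
have k0 : 0 <= h0 by exact: sqrtr_ge0.
have k1 : 0 <= h1 by exact: sqrtr_ge0.
have cs : b0 * b1 - p * q <= h0 * h1.
  rewrite leNgt; apply/negP => hc.
  have : (h0 * h1) ^+ 2 < (b0 * b1 - p * q) ^+ 2.
    have xx : 0 <= h0 * h1 by apply: mulr_ge0.
    nra.
  rewrite exprMn e0 e1; have := sqr_ge0 (p * b1 + q * b0); nra.
have : D ^+ 2 <= (h0 + h1) ^+ 2 by nra.
nra.
Qed.

End Aux.
Arguments pS {R}. Arguments pD {R}. Arguments cost4 {R}. Arguments sqK {R}. Arguments sqrt_lip {R}.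
Definition Bz {R : realType} (z : (R * R) * (R * R)) : R := -4 * cost z.1 z.2.
Definition hz {R : realType} (z : (R * R) * (R * R)) (s : R) : R :=
  Num.sqrt ((s - pS z.2) ^+ 2 + Bz z).

Definition HypI {R : realType} (A : set ((R * R) * (R * R))) :=
  forall x0 y0 x1 y1 : R * R, A (x0, y0) -> A (x1, y1) ->
     forall t : R, 0 <= t <= 1 ->
       (1 - t) * cost x0 y0 + t * cost x1 y1 <= t * (1 - t) * cost y0 y1.

Lemma Bz_ge0 {R : realType} (A : set ((R * R) * (R * R))) z :
  HypI A -> A z -> 0 <= Bz z.
Proof.
case: z => x y HI Az; have := HI x y x y Az Az 0.
rewrite lexx ler01 => /(_ isT); rewrite /Bz /=; lra.
Qed.

Lemma keyz {R : realType} (A : set ((R * R) * (R * R))) z0 z1 (s : R) :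
  HypI A -> A z0 -> A z1 -> pD z0.2 - hz z0 s <= pD z1.2 + hz z1 s.
Proof.
move=> HI A0 A1.
have g0 := @Bz_ge0 R A _ HI A0; have g1 := @Bz_ge0 R A _ HI A1.
move: A0 A1; case: z0 g0 => x0 y0 g0; case: z1 g1 => x1 y1 g1 /= A0 A1.
set p := s - pS y0; set q := s - pS y1; set D := pD y0 - pD y1.
have KA := @keyA R (D ^+ 2 - (q - p) ^+ 2) _ _ g0 g1.
have K : D ^+ 2 - (q - p) ^+ 2 <= (Num.sqrt (Bz (x0, y0)) + Num.sqrt (Bz (x1, y1))) ^+ 2.
  apply: KA => t ht.
  have := HI x0 y0 x1 y1 A0 A1 t ht.
  have c4 := cost4 y0 y1.
  have -> : q - p = pS y0 - pS y1 by rewrite /q /p; ring.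
  have e : t * (1 - t) * (4 * cost y0 y1) = t * (1 - t) * ((pS y0 - pS y1) ^+ 2 - D ^+ 2) by rewrite c4.
  rewrite /Bz /=; nra.
have KB := @keyB R p q D _ _ (sqrtr_ge0 (Bz (x0, y0))) (sqrtr_ge0 (Bz (x1, y1))).
rewrite !sqr_sqrtr // in KB.
have {}KB : D <= hz (x0, y0) s + hz (x1, y1) s by apply: KB; lra.
rewrite /D in KB; lra.
Qed.
Arguments keyz {R A z0 z1 s}.

Definition Uf {R : realType} (A : set ((R * R) * (R * R))) (s : R) : R :=
  inf [set pD z.2 + hz z s | z in A].
Definition Gr {R : realType} (A : set ((R * R) * (R * R))) : set (R * R) :=
  [set g | pD g = Uf A (pS g)].

Section U.
Variables (R : realType) (A : set ((R * R) * (R * R))).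
Hypothesis HI : HypI A.

Lemma U_lb z s : A z -> pD z.2 - hz z s <= Uf A s.
Proof.
move=> Az; apply: lb_le_inf; first by exists (pD z.2 + hz z s); exists z.
by rewrite /lbound /= => _ [w Aw <-]; exact: keyz HI Az Aw.
Qed.

Lemma U_ub z s : A z -> Uf A s <= pD z.2 + hz z s.
Proof.
move=> Az; apply: ge_inf; last by exists z.
exists (pD z.2 - hz z s); rewrite /lbound /= => _ [w Aw <-]; exact: keyz HI Az Aw.
Qed.

Lemma U_lip s s' : Uf A s <= Uf A s' + `|s - s'|.
Proof.
have [[z0 Az0]|A0] := pselect (exists z, A z); last first.
  have E : forall u, [set pD z.2 + hz z u | z in A] = set0.
    move=> u; apply/seteqP; split => // y [z Az _]; exfalso; apply: A0; by exists z.
  by rewrite /Uf !E inf0 add0r.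
rewrite -lerBlDr; apply: lb_le_inf; first by exists (pD z0.2 + hz z0 s'); exists z0.
rewrite /lbound /= => _ [z Az <-].
have h1 := U_ub z s Az.
have h2 : hz z s <= hz z s' + `|s - s'|.
  rewrite /hz; have -> : s - s' = (s - pS z.2) - (s' - pS z.2) by ring.
  apply: sqrt_lip; exact: (@Bz_ge0 R A _ HI Az).
lra.
Qed.

End U.
Arguments U_lip {R A}. Arguments U_lb {R A} HI {z} s. Arguments U_ub {R A} HI {z} s.

Lemma costC {R : realType} (r s : R * R) : cost r s = cost s r.
Proof. rewrite /cost; ring. Qed.

Theorem lemma6 (R : realType) (A : set ((R * R) * (R * R))) :
  (forall x0 y0 x1 y1 : R * R, A (x0, y0) -> A (x1, y1) ->
     forall t : R, 0 <= t <= 1 ->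
       (1 - t) * cost x0 y0 + t * cost x1 y1 <= t * (1 - t) * cost y0 y1)
  <->
  (exists G : set (R * R), maximal_monotone G /\
     forall x y : R * R, A (x, y) -> ((cost x y)%:E <= phi G y)%E).
Proof.
split.
- move=> HI0; have HI : HypI A := HI0.
  exists (Gr A); split; first split.
  + move=> r s Gr' Gs'.
    have c4 := cost4 r s.
    have l1 := U_lip HI (pS r) (pS s).
    have l2 := U_lip HI (pS s) (pS r).
    rewrite /Gr /= in Gr' Gs'.
    rewrite distrC in l2.
    have a : `|pD r - pD s| <= `|pS r - pS s|.
      by rewrite Gr' Gs' ler_norml; apply/andP; split; lra.
    have n0 : 0 <= `|pD r - pD s| by [].
    have := sqK (pD r - pD s); have := sqK (pS r - pS s).
    nra.
  + move=> H mH GH; apply/seteqP; split => // h Hh.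
    set S := pS h.
    pose g := ((S + Uf A S) / 2, (S - Uf A S) / 2).
    have Sg : pS g = S by rewrite /pS /=; lra.
    have Dg : pD g = Uf A S by rewrite /pD /=; lra.
    have Gg : Gr A g by rewrite /Gr /= Dg Sg.
    have := mH g h (GH _ Gg) Hh.
    have := cost4 g h; rewrite Sg Dg /S subrr expr0n /= sub0r => c4 c0.
    have e : (Uf A (pS h) - pD h) ^+ 2 = 0.
      by apply/eqP; rewrite eq_le sqr_ge0 andbT; lra.
    move/eqP: e; rewrite expf_eq0 /= subr_eq0 => /eqP e.
    by rewrite /Gr /= e.
  + move=> x y Axy; rewrite /phi; apply/ereal_infP => _ [g Gg <-]; rewrite lee_fin.
    have lb := U_lb HI (pS g) Axy; have ub := U_ub HI (pS g) Axy.
    rewrite /Gr /= in Gg; rewrite -Gg /= in lb ub.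
    have c4 := cost4 g y.
    have Bg := @Bz_ge0 R A _ HI Axy.
    set B := Bz (x, y) in Bg.
    have BE : B = -4 * cost x y by [].
    move: lb ub; rewrite /hz /= -/B => lb ub.
    set h := Num.sqrt _ in lb ub.
    have hp : 0 <= (pS g - pS y) ^+ 2 + B by rewrite addr_ge0 // sqr_ge0.
    have h2 : h ^+ 2 = (pS g - pS y) ^+ 2 + B by rewrite sqr_sqrtr.
    have h0 : 0 <= h by exact: sqrtr_ge0.
    have pr : 0 <= (h - (pD g - pD y)) * (h + (pD g - pD y)).
      by apply: mulr_ge0; lra.
    nra.
- move=> [G [[mG maxG] HG]] x0 y0 x1 y1 A0 A1 t /andP [t0 t1].
  pose yt := ((1 - t) * y0.1 + t * y1.1, (1 - t) * y0.2 + t * y1.2).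
  have cyy : cost yt yt = 0 by rewrite /cost subrr mul0r.
  have [g Gg cg] : exists2 g, G g & cost g yt <= 0.
    apply: contrapT => nex.
    have mH : monotone (G `|` [set yt]).
      have aux : forall r, G r -> 0 <= cost r yt.
        move=> r Gr; case: (lerP (cost r yt) 0) => hr; last exact: ltW.
        by exfalso; apply: nex; exists r.
      move=> r s [Gr|->] [Gs|->]; first exact: mG.
      * exact: aux.
      * rewrite costC; exact: aux.
      * by rewrite cyy.
    have E := maxG _ mH (fun z Gz => or_introl Gz).
    have Gyt : G yt by rewrite -E; right.
    by apply: nex; exists yt => //; rewrite cyy.
  have cle : forall x y, A (x, y) -> cost x y <= cost g y.
    move=> x y Axy; rewrite -lee_fin; apply: (le_trans (HG _ _ Axy)).
    rewrite /phi; apply: ge_ereal_inf; exists (cost g y)%:E => //.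
    by exists g.
  have c0 := cle _ _ A0; have c1 := cle _ _ A1.
  have id : (1 - t) * cost g y0 + t * cost g y1 = cost g yt + t * (1 - t) * cost y0 y1.
    by rewrite /cost /=; ring.
  have i0 := ler_wpM2l (_ : 0 <= 1 - t) c0.
  have i1 := ler_wpM2l t0 c1.
  have {}i0 := i0 ltac:(lra).
  lra.
Qed.
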